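(* In an $m$-player layered finite-horizon Markov game, let $\pi^j_t,\pi^j_{t+1}$ ($j\in[m]$) be arbitrary policies of the players in episodes $t$ and $t+1$. Then for any player $i\in[m]$ and any policy $\mu$ of player $i$, $$\big\|q^\mu_{P^i_{t+1}}-q^\mu_{P^i_t}\big\|_\infty\le H^2\sum_{j\ne i}\|\pi^j_{t+1}-\pi^j_t\|_{\infty,1}.$$
   Context: Markov game: horizon $H$; states $\mathcal S=\bigcup_{h=1}^{H+1}\mathcal S_h$ with $\mathcal S_1=\{s_1\}$; players $i\in[m]$ with finite action sets $\mathcal A_i$; for $s\in\mathcal S_h$ and joint action $\mathbf a$, $P(\cdot\mid s,\mathbf a)$ is a distribution over $\mathcal S_{h+1}$. Policies assign $\pi^j(\cdot\mid s)\in\Delta_{\mathcal A_j}$, players act independently. The induced transition kernel of player $i$ in episode $t$ is $P^i_t(\cdot\mid s,a)=\mathbb E_{\mathbf a\sim\boldsymbol\pi_t(\cdot\mid s)}[P(\cdot\mid s,\mathbf a)\mid a^i=a]$, where $\boldsymbol\pi_t(\cdot\mid s)$ is the product of the $\pi^j_t(\cdot\mid s)$. For a single-agent kernel $P'$ and policy $\mu$, $q^\mu_{P'}(s)=\Pr(s_h=s\mid P',\mu,s_1)$ for $s\in\mathcal S_h$, viewed as a vector indexed by $\mathcal S$. $\|\pi-\tilde\pi\|_{\infty,1}=\max_s\|\pi(\cdot\mid s)-\tilde\pi(\cdot\mid s)\|_1$. *)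

(* Defs.v *)
From HB Require Import structures.
From mathcomp Require Import all_boot all_order all_algebra.
Set Implicit Arguments. Unset Strict Implicit. Unset Printing Implicit Defensive.
Import Order.TTheory GRing.Theory Num.Theory.
Local Open Scope ring_scope.

Definition joint_action (m : nat) (A : 'I_m -> finType) : finType :=
  {dffun forall j : 'I_m, A j}.

Definition is_policy (R : numDomainType) (S Act : finType) (pol : S -> Act -> R) : Prop :=
  forall s, (forall a, 0 <= pol s a) /\ \sum_(a : Act) pol s a = 1.

(* Layered finite-horizon Markov game: lay s = h means s \in S_h, 1 <= h <= H+1,
   S_1 = {s1}; for s \in S_h with h <= H, P(.|s,a) is a distribution on S_{h+1}. *)
Definition layered_game (R : numDomainType) (S : finType) (H : nat)
  (lay : S -> nat) (s1 : S) (Ja : finType) (P : S -> Ja -> S -> R) : Prop :=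
  (forall s, (1 <= lay s <= H.+1)%N) /\
  (forall s, lay s = 1%N <-> s = s1) /\
  (forall s a, (lay s <= H)%N ->
     (forall s', 0 <= P s a s') /\ \sum_(s' : S) P s a s' = 1 /\
     (forall s', P s a s' != 0 -> lay s' = (lay s).+1)).

(* Induced transition kernel of player i:
   P^i(s'|s,a) = E_{b ~ prod_j pi j (.|s)} [ P(s'|s,b) | b^i = a ]
               = sum_{b : b i = a} (prod_{j <> i} pi j s (b j)) P(s'|s,b)
   (players act independently). *)
Definition induced_kernel (R : numDomainType) (m : nat) (A : 'I_m -> finType)
  (S : finType) (P : S -> joint_action A -> S -> R)
  (pi : forall j : 'I_m, S -> A j -> R) (i : 'I_m) : S -> A i -> S -> R :=
  fun s a s' =>
    \sum_(b : joint_action A | b i == a)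
       (\prod_(j : 'I_m | j != i) pi j s (b j)) * P s b s'.

Arguments induced_kernel [R m A S] P pi i.

(* State distribution at step n+1 (n = 0 is step 1) under single-agent kernel
   Pk and policy mu, starting at s1. *)
Fixpoint state_dist (R : numDomainType) (S Act : finType) (s1 : S)
  (Pk : S -> Act -> S -> R) (mu : S -> Act -> R) (n : nat) : S -> R :=
  match n with
  | O => fun s => if s == s1 then 1 else 0
  | n'.+1 => fun s =>
      \sum_(s0 : S) state_dist s1 Pk mu n' s0 *
                    \sum_(a : Act) mu s0 a * Pk s0 a s
  end.

(* q^mu_{Pk}(s) = Pr(s_h = s | Pk, mu, s1) for s \in S_h. *)
Definition occupancy (R : numDomainType) (S Act : finType) (lay : S -> nat) (s1 : S)
  (Pk : S -> Act -> S -> R) (mu : S -> Act -> R) : S -> R :=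
  fun s => state_dist s1 Pk mu (lay s).-1 s.

Definition sup_norm (R : realDomainType) (S : finType) (v : S -> R) : R :=
  \big[Num.max/0]_(s : S) `|v s|.

Definition pol_dist (R : realDomainType) (S Act : finType) (p p' : S -> Act -> R) : R :=
  \big[Num.max/0]_(s : S) \sum_(a : Act) `|p s a - p' s a|.

(* Main.v *)
Require Import Defs.
From HB Require Import structures.
From mathcomp Require Import all_boot all_order all_algebra.
Import Order.TTheory GRing.Theory Num.Theory.
Local Open Scope ring_scope.
Set Implicit Arguments. Unset Strict Implicit.

Lemma sum_prod_dffun (R : comNzRingType) (I : finType) (T_ : I -> finType)
  (g : forall i, T_ i -> R) :
  \sum_(b : {dffun forall i, T_ i}) \prod_i g i (b i) = \prod_i \sum_(x : T_ i) g i x.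
Proof.
rewrite (reindex (@dffun_of_fprod I T_)); last exact/onW_bij/dffun_of_fprod_bij.
under eq_bigr => t _ do under eq_bigr => i _ do rewrite ffunE.
pose P_ : forall i, {ffun T_ i -> R} := fun i => [ffun x : T_ i => g i x].
have := @big_fprod_dep R 0 1 *%R +%R I T_ P_ predT.
move=> E.
transitivity (\sum_(t : fprod T_) \prod_i P_ i (t i)).
  by apply: eq_bigr => t _; apply: eq_bigr => i _; rewrite ffunE.
rewrite E.
rewrite (eq_bigl (fun g0 => g0 \in family (tagged_with T_))); last by move=> x; rewrite andbT.
rewrite big_mkcond /=.
transitivity (\sum_(f : {ffun I -> {i : I & T_ i}}) \prod_i untag 0 (P_ i) (f i)).
  apply: eq_bigr => f _; case: ifP => // /negbT /familyP Hn.
  have [i Hi] : exists i, tag (f i) != i.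
    case: (pickP (fun i => tag (f i) != i)) => [i Hi|Hnone]; first by exists i.
    exfalso; apply: Hn => x; have := Hnone x => /= /negbFE.
    by rewrite inE.
  by rewrite (bigD1 i) //= untag_dflt // mul0r.
rewrite -(bigA_distr_bigA (fun i (x : {i : I & T_ i}) => untag 0 (P_ i) x)); apply: eq_bigr => i _.
transitivity (\sum_(x : T_ i) P_ i x); last by apply: eq_bigr => x _; rewrite ffunE.
rewrite (big_tag (fun i x => P_ i x)) [RHS]big_mkcond /=.
apply: eq_bigr => x _; case: ifP => //= /negbT H.
by rewrite untag_dflt.
Qed.

Definition dw (R : Type) (I : finType) (T_ : I -> finType)
  (f : forall j, T_ j -> R) (k : I) (x : T_ k -> R) : forall j, T_ j -> R :=
  @dfwith I (fun j => T_ j -> R) f k x.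
Arguments dw {R I T_} f {k} x j.

Lemma dw_in (R : Type) (I : finType) (T_ : I -> finType)
  (f : forall j, T_ j -> R) (k : I) (x : T_ k -> R) : dw f x k = x.
Proof. exact: dfwith_in. Qed.

Lemma dw_out (R : Type) (I : finType) (T_ : I -> finType)
  (f : forall j, T_ j -> R) (k : I) (x : T_ k -> R) j : k != j -> dw f x j = f j.
Proof. exact: dfwith_out. Qed.

Lemma prod_dw (R : comNzRingType) (I : finType) (T_ : I -> finType)
  (f : forall j, T_ j -> R) (k : I) (x : T_ k -> R) (b : forall j, T_ j) :
  \prod_j dw f x j (b j) = x (b k) * \prod_(j | j != k) f j (b j).
Proof.
rewrite (bigD1 k) //= dw_in; congr (_ * _).
by apply: eq_bigr => j Hj; rewrite dw_out // eq_sym.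
Qed.

Lemma sum_dw (R : comNzRingType) (I : finType) (T_ : I -> finType)
  (f : forall j, T_ j -> R) (k : I) (x : T_ k -> R) :
  \sum_(b : {dffun forall j, T_ j}) x (b k) * \prod_(j | j != k) f j (b j)
  = (\sum_y x y) * \prod_(j | j != k) \sum_y f j y.
Proof.
rewrite (eq_bigr (fun b : {dffun forall j, T_ j} => \prod_j dw f x j (b j))); last first.
  by move=> b _; rewrite prod_dw.
rewrite sum_prod_dffun (bigD1 k) //= dw_in; congr (_ * _).
by apply: eq_bigr => j Hj; rewrite dw_out // eq_sym.
Qed.

Lemma tv_prod (R : realFieldType) (m : nat) (T_ : 'I_m -> finType)
  (g g' : forall j, T_ j -> R) :
  (forall j x, 0 <= g j x) -> (forall j x, 0 <= g' j x) ->
  (forall j, \sum_x g j x = 1) -> (forall j, \sum_x g' j x = 1) ->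
  \sum_(b : {dffun forall j, T_ j}) `|\prod_j g' j (b j) - \prod_j g j (b j)|
  <= \sum_j \sum_x `|g' j x - g j x|.
Proof.
move=> g0 g'0 g1 g'1.
pose e (k : nat) : forall j, T_ j -> R :=
  fun j x => if (j < k)%N then g' j x else g j x.
pose h (k : nat) (b : {dffun forall j, T_ j}) := \prod_j e k j (b j).
have E (b : {dffun forall j, T_ j}) : \prod_j g' j (b j) - \prod_j g j (b j) = \sum_(k < m) (h k.+1 b - h k b).
  rewrite -(big_mkord xpredT (fun k => h k.+1 b - h k b)) telescope_sumr // /h /e.
  by congr (_ - _); apply: eq_bigr => j _; rewrite ?ltn_ord ?ltn0.
have Ek (b : {dffun forall j, T_ j}) (k : 'I_m) : h k.+1 b - h k b
    = \prod_j dw (e k) (fun x => g' k x - g k x) j (b j).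
  rewrite prod_dw /h (bigD1 k) //= [X in _ - X](bigD1 k) //= /e ltnSn ltnn.
  rewrite mulrBl; congr (_ * _ - _); apply: eq_bigr => j Hj; rewrite ltnS leq_eqVlt.
  by have -> : (nat_of_ord j == nat_of_ord k) = false by apply/negbTE.
rewrite (eq_bigr (fun b => `|\sum_(k < m) (h k.+1 b - h k b)|)); last first.
  by move=> b _; rewrite E.
apply: le_trans (ler_sum _ (fun b _ => ler_norm_sum _ _ _)) _.
rewrite exchange_big /=; apply: ler_sum => k _.
rewrite (eq_bigr (fun b : {dffun forall j, T_ j} =>
   (fun y => `|g' k y - g k y|) (b k) * \prod_(j | j != k) e k j (b j))); last first.
  move=> b _; rewrite Ek prod_dw normrM [X in _ * X]ger0_norm //.
  by apply: prodr_ge0 => j _; rewrite /e; case: ifP.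
rewrite (sum_dw (e k) (fun y => `|g' k y - g k y|)) [X in _ * X]big1 ?mulr1 // => j _.
by rewrite /e; case: (nat_of_ord j < nat_of_ord k)%N.
Qed.

Lemma sum_ind1 (R : realFieldType) (T : finType) (a : T) :
  \sum_(x : T) (x == a)%:R = 1 :> R.
Proof.
by rewrite (bigD1 a) //= eqxx big1 ?addr0 // => x /negbTE ->.
Qed.

Lemma kernel_tv (R : realFieldType) m (A : 'I_m -> finType) (S : finType)
  (P : S -> joint_action A -> S -> R) (pi pi' : forall j, S -> A j -> R)
  (i : 'I_m) s a :
  (forall j, is_policy (pi j)) -> (forall j, is_policy (pi' j)) ->
  (forall b s', 0 <= P s b s') -> (forall b, \sum_s' P s b s' = 1) ->
  \sum_s' `|induced_kernel P pi' i s a s' - induced_kernel P pi i s a s'|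
   <= \sum_(j | j != i) \sum_x `|pi' j s x - pi j s x|.
Proof.
move=> hp hp' P0 P1.
rewrite /induced_kernel.
pose G := dw (fun j => pi j s) (fun x : A i => (x == a)%:R).
pose G' := dw (fun j => pi' j s) (fun x : A i => (x == a)%:R).
apply: (@le_trans _ _ (\sum_(b : {dffun forall j, A j})
          `|\prod_j G' j (b j) - \prod_j G j (b j)|)).
  apply: (@le_trans _ _ (\sum_s' \sum_(b : joint_action A | b i == a)
     `|\prod_(j | j != i) pi' j s (b j) - \prod_(j | j != i) pi j s (b j)| * P s b s')).
    apply: ler_sum => s' _; rewrite -sumrB; apply: le_trans (ler_norm_sum _ _ _) _.
    apply: ler_sum => b _.
    by rewrite -mulrBl normrM (ger0_norm (P0 b s')).
  rewrite exchange_big /=.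
  under eq_bigr => b _ do rewrite -big_distrr /= P1 mulr1.
  rewrite big_mkcond /=; apply: ler_sum => b _.
  rewrite /G /G' !prod_dw /=.
  by case E: (b i == a); rewrite ?mul1r ?mul0r ?subrr ?normr0.
have G0 : forall j x, 0 <= G j x.
  move=> j x; rewrite /G; case: (eqVneq i j) => [Eij|Hij].
    by subst j; rewrite dw_in.
  by rewrite dw_out //; case: (hp j s).
have G'0 : forall j x, 0 <= G' j x.
  move=> j x; rewrite /G'; case: (eqVneq i j) => [Eij|Hij].
    by subst j; rewrite dw_in.
  by rewrite dw_out //; case: (hp' j s).
have G1 : forall j, \sum_x G j x = 1.
  move=> j; rewrite /G; case: (eqVneq i j) => [Eij|Hij].
    by subst j; rewrite dw_in sum_ind1.
  by rewrite dw_out //; case: (hp j s).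
have G'1 : forall j, \sum_x G' j x = 1.
  move=> j; rewrite /G'; case: (eqVneq i j) => [Eij|Hij].
    by subst j; rewrite dw_in sum_ind1.
  by rewrite dw_out //; case: (hp' j s).
apply: le_trans (tv_prod G0 G'0 G1 G'1) _.
rewrite (bigD1 i) //= /G /G' dw_in big1 ?add0r => [|x _]; last first.
  by rewrite dw_in subrr normr0.
by rewrite le_eqVlt; apply/orP; left; apply/eqP/eq_bigr => j Hj; rewrite !dw_out // eq_sym.
Qed.

Lemma induced_good (R : realFieldType) m (A : 'I_m -> finType) (S : finType)
  (H : nat) (lay : S -> nat) (s1 : S)
  (P : S -> joint_action A -> S -> R) (pi : forall j, S -> A j -> R) (i : 'I_m) :
  layered_game H lay s1 P -> (forall j, is_policy (pi j)) ->
  forall s a, (lay s <= H)%N ->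
   (forall s', 0 <= induced_kernel P pi i s a s') /\
   \sum_s' induced_kernel P pi i s a s' = 1 /\
   (forall s', lay s' != (lay s).+1 -> induced_kernel P pi i s a s' = 0).
Proof.
move=> [_ [_ HP]] hp s a Hs.
split; [|split].
- move=> s'; apply: sumr_ge0 => b _; apply: mulr_ge0.
    by apply: prodr_ge0 => j _; case: (hp j s).
  by have [P0 _] := HP s b Hs.
- rewrite /induced_kernel exchange_big /=.
  rewrite (eq_bigr (fun b : joint_action A => \prod_(j | j != i) pi j s (b j))); last first.
    by move=> b _; rewrite -big_distrr /=; have [_ [-> _]] := HP s b Hs; rewrite mulr1.
  pose G := dw (fun j => pi j s) (fun x : A i => (x == a)%:R).
  transitivity (\sum_(b : {dffun forall j, A j}) \prod_j G j (b j)).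
    rewrite big_mkcond /=; apply: eq_bigr => b _.
    by rewrite /G prod_dw /=; case: (b i == a); rewrite ?mul1r ?mul0r.
  rewrite sum_prod_dffun big1 // => j _.
  rewrite /G; case: (eqVneq i j) => [Eij|Hij].
    by subst j; rewrite dw_in sum_ind1.
  by rewrite dw_out //; case: (hp j s).
- move=> s' Hs'; apply: big1 => b _.
  have [_ [_ Hsup]] := HP s b Hs.
  have [->|/Hsup Hl] := eqVneq (P s b s') 0; first by rewrite mulr0.
  by rewrite Hl eqxx in Hs'.
Qed.

Lemma sd_inv (R : realFieldType) (S Act : finType) (H : nat) (lay : S -> nat)
  (s1 : S) (Q : S -> Act -> S -> R) (mu : S -> Act -> R) :
  lay s1 = 1%N -> is_policy mu ->
  (forall s a, (lay s <= H)%N -> (forall s', 0 <= Q s a s') /\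
     \sum_s' Q s a s' = 1 /\ (forall s', lay s' != (lay s).+1 -> Q s a s' = 0)) ->
  forall n, (n <= H)%N ->
   (forall s, 0 <= state_dist s1 Q mu n s) /\ \sum_s state_dist s1 Q mu n s = 1 /\
   (forall s, lay s != n.+1 -> state_dist s1 Q mu n s = 0).
Proof.
move=> Hs1 Hmu HQ; elim=> [_|n IH Hn] /=.
  split; first by move=> s; case: eqP.
  split; first by rewrite (bigD1 s1) //= eqxx big1 ?addr0 // => s /negbTE ->.
  move=> s; case: (eqVneq s s1) => [->|Hne]; first by rewrite Hs1.
  by [].
have [d0 [d1 dsup]] := IH (ltnW Hn).
have LH : forall s0, lay s0 = n.+1 -> (lay s0 <= H)%N by move=> s0 ->.
split; [|split].
- move=> s; apply: sumr_ge0 => s0 _.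
  case: (eqVneq (lay s0) n.+1) => [E|Ne]; last by rewrite dsup // mul0r.
  apply: mulr_ge0 => //; apply: sumr_ge0 => a _; apply: mulr_ge0.
    by case: (Hmu s0).
  by have [Q0 _] := HQ s0 a (LH s0 E); exact: Q0.
- rewrite exchange_big /= -[RHS]d1; apply: eq_bigr => s0 _.
  rewrite -big_distrr /=.
  case: (eqVneq (lay s0) n.+1) => [E|Ne]; last by rewrite dsup // !mul0r.
  rewrite exchange_big /= (eq_bigr (fun a => mu s0 a)); last first.
    move=> a _; have [_ [Q1 _]] := HQ s0 a (LH s0 E).
    by rewrite -big_distrr /= Q1 mulr1.
  by case: (Hmu s0) => _ ->; rewrite mulr1.
- move=> s Hs; apply: big1 => s0 _.
  case: (eqVneq (lay s0) n.+1) => [E|Ne]; last by rewrite dsup // mul0r.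
  rewrite big1 ?mulr0 // => a _; have [_ [_ Qs]] := HQ s0 a (LH s0 E).
  by rewrite Qs ?mulr0 // E.
Qed.

Lemma sd_diff (R : realFieldType) (S Act : finType) (H : nat) (lay : S -> nat)
  (s1 : S) (Q Q' : S -> Act -> S -> R) (mu : S -> Act -> R) (D : R) :
  lay s1 = 1%N -> is_policy mu ->
  (forall s a, (lay s <= H)%N -> (forall s', 0 <= Q s a s') /\
     \sum_s' Q s a s' = 1 /\ (forall s', lay s' != (lay s).+1 -> Q s a s' = 0)) ->
  (forall s a, (lay s <= H)%N -> (forall s', 0 <= Q' s a s') /\
     \sum_s' Q' s a s' = 1 /\ (forall s', lay s' != (lay s).+1 -> Q' s a s' = 0)) ->
  0 <= D ->
  (forall s a, (lay s <= H)%N -> \sum_s' `|Q' s a s' - Q s a s'| <= D) ->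
  forall n, (n <= H)%N ->
  \sum_s `|state_dist s1 Q' mu n s - state_dist s1 Q mu n s| <= n%:R * D.
Proof.
move=> Hs1 Hmu HQ HQ' D0 HD; elim=> [_|n IH Hn] /=.
  by rewrite mul0r big1 // => s _; rewrite subrr normr0.
have [d0 [d1 dsup]] := sd_inv Hs1 Hmu HQ (ltnW Hn).
have [e0 [e1 esup]] := sd_inv Hs1 Hmu HQ' (ltnW Hn).
have LH : forall s0, lay s0 = n.+1 -> (lay s0 <= H)%N by move=> s0 ->.
set d := state_dist s1 Q mu n; set e := state_dist s1 Q' mu n.
pose K (Q0 : S -> Act -> S -> R) s0 s := \sum_a mu s0 a * Q0 s0 a s.
have Kabs s0 : (lay s0 <= H)%N -> \sum_s `|K Q' s0 s| = 1.
  move=> Hl; rewrite (eq_bigr (K Q' s0)); last first.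
    move=> s _; rewrite ger0_norm //; apply: sumr_ge0 => a _; apply: mulr_ge0.
      by case: (Hmu s0).
    by have [Q0 _] := HQ' s0 a Hl.
  rewrite /K exchange_big /= (eq_bigr (fun a => mu s0 a)); last first.
    move=> a _; have [_ [Q1 _]] := HQ' s0 a Hl.
    by rewrite -big_distrr /= Q1 mulr1.
  by case: (Hmu s0).
have Kdiff s0 : (lay s0 <= H)%N -> \sum_s `|K Q' s0 s - K Q s0 s| <= D.
  move=> Hl.
  apply: (@le_trans _ _ (\sum_s \sum_a mu s0 a * `|Q' s0 a s - Q s0 a s|)).
    apply: ler_sum => s _; rewrite /K -sumrB; apply: le_trans (ler_norm_sum _ _ _) _.
    apply: ler_sum => a _; rewrite -mulrBr normrM ger0_norm //.
    by case: (Hmu s0).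
  rewrite exchange_big /=.
  apply: (@le_trans _ _ (\sum_a mu s0 a * D)).
    apply: ler_sum => a _; rewrite -big_distrr /=; apply: ler_wpM2l.
      by case: (Hmu s0).
    exact: HD.
  by rewrite -big_distrl /=; case: (Hmu s0) => _ ->; rewrite mul1r.
have Split s : \sum_s0 e s0 * K Q' s0 s - \sum_s0 d s0 * K Q s0 s
   = \sum_s0 ((e s0 - d s0) * K Q' s0 s + d s0 * (K Q' s0 s - K Q s0 s)).
  rewrite -sumrB; apply: eq_bigr => s0 _.
  by rewrite mulrBl mulrBr addrA subrK.
apply: (@le_trans _ _ (\sum_s \sum_s0 (`|e s0 - d s0| * `|K Q' s0 s|
                                      + d s0 * `|K Q' s0 s - K Q s0 s|))).
  apply: ler_sum => s _.
  have -> : state_dist s1 Q' mu n.+1 s - state_dist s1 Q mu n.+1 s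
     = \sum_s0 e s0 * K Q' s0 s - \sum_s0 d s0 * K Q s0 s by [].
  rewrite Split; apply: le_trans (ler_norm_sum _ _ _) _.
  apply: ler_sum => s0 _; apply: le_trans (ler_normD _ _) _.
  by rewrite !normrM (ger0_norm (d0 s0)).
rewrite exchange_big /=.
rewrite (eq_bigr (fun s0 => `|e s0 - d s0| * \sum_s `|K Q' s0 s|
    + d s0 * \sum_s `|K Q' s0 s - K Q s0 s|)); last first.
  by move=> s0 _; rewrite big_split /= -!big_distrr.
rewrite big_split /=.
rewrite (mulrSr 1 n) mulrDl mul1r; apply: lerD.
  apply: le_trans (IH (ltnW Hn)).
  apply: ler_sum => s0 _.
  case: (eqVneq (lay s0) n.+1) => [E|Ne].
    by rewrite Kabs ?mulr1 // LH.
  by rewrite /e /d esup // dsup // subrr normr0 !mul0r.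
rewrite -[X in _ <= X]mul1r -d1 big_distrl /=.
apply: ler_sum => s0 _.
case: (eqVneq (lay s0) n.+1) => [E|Ne].
  by apply: ler_wpM2l => //; apply: Kdiff; rewrite LH.
by rewrite /d dsup // !mul0r.
Qed.

Lemma bigmax_ge_seq (R : realDomainType) (I : eqType) (r : seq I) (F : I -> R) x :
  x \in r -> F x <= \big[Num.max/0]_(i <- r) F i.
Proof.
elim: r => // y r IH; rewrite inE big_cons le_max => /orP [/eqP ->|/IH ->].
  by rewrite le_refl.
by rewrite orbT.
Qed.

Lemma bigmax_ge0_seq (R : realDomainType) (I : Type) (r : seq I) (F : I -> R) :
  0 <= \big[Num.max/0]_(i <- r) F i.
Proof.
by elim: r => [|y r IH]; rewrite ?big_nil // big_cons le_max IH orbT.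
Qed.

Lemma pol_dist_ge (R : realDomainType) (S Act : finType) (p p' : S -> Act -> R) s :
  \sum_a `|p s a - p' s a| <= pol_dist p p'.
Proof. exact: (bigmax_ge_seq (fun s => \sum_a `|p s a - p' s a|) (mem_index_enum s)). Qed.

Lemma pol_dist_ge0 (R : realDomainType) (S Act : finType) (p p' : S -> Act -> R) :
  0 <= pol_dist p p'.
Proof. exact: bigmax_ge0_seq. Qed.

Unset Implicit Arguments.

Theorem lemma21 (R : realFieldType) (m : nat) (A : 'I_m -> finType)
  (S : finType) (H : nat) (lay : S -> nat) (s1 : S)
  (P : S -> joint_action A -> S -> R)
  (pi_t pi_t1 : forall j : 'I_m, S -> A j -> R)
  (i : 'I_m) (mu : S -> A i -> R) :
  layered_game H lay s1 P ->
  (forall j, is_policy (pi_t j)) ->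
  (forall j, is_policy (pi_t1 j)) ->
  is_policy mu ->
  sup_norm (fun s => occupancy lay s1 (induced_kernel P pi_t1 i) mu s
                     - occupancy lay s1 (induced_kernel P pi_t i) mu s)
  <= (H ^ 2)%:R * \sum_(j : 'I_m | j != i) pol_dist (pi_t1 j) (pi_t j).
Proof.
move=> HL hpt hpt1 hmu.
have [Hlay [Hs1 HP]] := HL.
have s1lay : lay s1 = 1%N by apply/Hs1.
set D := \sum_(j : 'I_m | j != i) pol_dist (pi_t1 j) (pi_t j).
have D0 : 0 <= D by apply: sumr_ge0 => j _; apply: pol_dist_ge0.
have gQ := induced_good (i:=i) HL hpt.
have gQ' := induced_good (i:=i) HL hpt1.
have HD : forall s a, (lay s <= H)%N ->
    \sum_s' `|induced_kernel P pi_t1 i s a s' - induced_kernel P pi_t i s a s'| <= D.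
  move=> s a Hs.
  apply: le_trans (kernel_tv (P:=P) (i:=i) (s:=s) a hpt hpt1 _ _) _.
  - by move=> b s'; have [P0 _] := HP s b Hs; exact: P0.
  - by move=> b; have [_ [P1 _]] := HP s b Hs; exact: P1.
  by apply: ler_sum => j _; apply: pol_dist_ge.
rewrite /sup_norm.
apply: (big_ind (fun x => x <= (H ^ 2)%:R * D)).
- by apply: mulr_ge0.
- by move=> x y Hx Hy; rewrite ge_max Hx Hy.
move=> s _; rewrite /occupancy.
have Hn : ((lay s).-1 <= H)%N.
  by have := Hlay s; case: (lay s) => [|l] /andP [_ h] //=.
apply: (@le_trans _ _ (\sum_s' `|state_dist s1 (induced_kernel P pi_t1 i) mu (lay s).-1 s'
                 - state_dist s1 (induced_kernel P pi_t i) mu (lay s).-1 s'|)).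
  by rewrite (bigD1 s) //= lerDl sumr_ge0.
apply: le_trans (sd_diff s1lay hmu gQ gQ' D0 HD Hn) _.
apply: ler_wpM2r => //; rewrite ler_nat.
apply: leq_trans Hn _.
by case: H {HL Hlay HP gQ gQ' HD} => // k; rewrite expnS expn1 leq_pmulr.
Qed.
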